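(* Let $G$ be a Lie group with multiplication $\mu(x,y)=xy$, division $\delta(x,y)=x^{-1}y$ (both maps $G\times G\to G$) and inversion $I\colon G\to G$, $I(x)=x^{-1}$. Then $\mathrm{D}(\mu,\delta)=\mathrm{D}(\mathrm{id}_G,I)$.
   Context: For continuous maps $f,g\colon X\to Y$, the homotopic distance $\mathrm{D}(f,g)$ is the least integer $n\geq 0$ such that there is an open cover $\{U_0,\dots,U_n\}$ of $X$ with $f|_{U_j}\simeq g|_{U_j}$ for all $j$; if no such cover exists, $\mathrm{D}(f,g)=\infty$. *)

(* Defs.v *)
From HB Require Import structures.
From mathcomp Require Import all_boot all_order all_algebra.
From mathcomp Require Import all_classical all_reals all_analysis.
Set Implicit Arguments. Unset Strict Implicit. Unset Printing Implicit Defensive.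
Import Order.TTheory GRing.Theory Num.Theory.
Import numFieldNormedType.Exports.
Local Open Scope classical_set_scope.
Local Open Scope ring_scope.

Definition topological_group (G : topologicalType)
    (mul : G -> G -> G) (inv : G -> G) (one : G) : Prop :=
  [/\ (forall x y z, mul x (mul y z) = mul (mul x y) z),
      (forall x, mul one x = x /\ mul x one = x),
      (forall x, mul (inv x) x = one /\ mul x (inv x) = one),
      continuous (fun p : G * G => mul p.1 p.2)
    & continuous inv].

Definition locally_euclidean (R : realType) (n : nat) (G : topologicalType) : Prop :=
  forall x : G, exists (U : set G) (phi : G -> 'rV[R]_n) (psi : 'rV[R]_n -> G),
    [/\ open U /\ U x, open (phi @` U),
        {within U, continuous phi},
        {within phi @` U, continuous psi}
      & forall y, U y -> psi (phi y) = y].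

Definition homotopic_on (R : realType) (X Y : topologicalType)
    (U : set X) (f g : X -> Y) : Prop :=
  exists H : X * R -> Y,
    [/\ {within U `*` `[0%R, 1%R], continuous H},
        (forall x, U x -> H (x, 0%R) = f x)
      & (forall x, U x -> H (x, 1%R) = g x)].

Definition hdist_le (R : realType) (X Y : topologicalType)
    (f g : X -> Y) (n : nat) : Prop :=
  exists U : nat -> set X,
    [/\ (forall j, (j <= n)%N -> open (U j)),
        \bigcup_(j in [set j | (j <= n)%N]) U j = setT
      & forall j, (j <= n)%N -> homotopic_on R (U j) f g].

(** Homotopic distance D(f,g): [Some n] with n least such that
    [hdist_le f g n], or [None] (= infinity) if no such cover exists. *)
Definition hdist (R : realType) (X Y : topologicalType) (f g : X -> Y)
    : option nat :=
  match pselect (exists n, hdist_le R f g n) with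
  | left h => Some (ex_minn (P := fun n => `[< hdist_le R f g n >])
                      (let: ex_intro n hn := h in ex_intro _ n (asboolT hn)))
  | right _ => None
  end.

(* Main.v *)
Require Import Defs.
From HB Require Import structures.
From mathcomp Require Import all_boot all_order all_algebra.
From mathcomp Require Import all_classical all_reals all_analysis.
Local Open Scope classical_set_scope.

Lemma wcP (X Y : topologicalType) (A : set X) (f : X -> Y) :
  {within A, continuous f} <-> (forall x, A x -> f @ within A (nbhs x) --> f x).
Proof. exact: (@subspace_continuousP X A Y f). Qed.

Lemma wc_comp_in (X Y Z : topologicalType) (A : set X) (B : set Y) (f : X -> Y) (g : Y -> Z):
 continuous f -> (forall x, A x -> B (f x)) -> {within B, continuous g} ->
 {within A, continuous (g \o f)}.
Proof.
move=> cf AB /wcP cg; apply/wcP => x Ax.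
apply: (cvg_comp f g _ (cg _ (AB _ Ax))).
move=> W /= hW; rewrite /within /= in hW *.
have := cf x _ hW; rewrite /= nbhs_simpl /=.
by apply: filterS => z Hz Az; apply: Hz; apply: AB.
Qed.

Lemma wc_comp_out (X Y Z : topologicalType) (A : set X) (f : X -> Y) (g : Y -> Z):
 {within A, continuous f} -> continuous g -> {within A, continuous (g \o f)}.
Proof.
move=> /wcP cf cg; apply/wcP => x Ax.
exact: (cvg_comp f g (cf _ Ax) (cg (f x))).
Qed.

Lemma wc_pair (X Y Z : topologicalType) (A : set X) (f : X -> Y) (g : X -> Z):
 {within A, continuous f} -> {within A, continuous g} ->
 {within A, continuous (fun x => (f x, g x))}.
Proof.
move=> /wcP cf /wcP cg; apply/wcP => x Ax.
have := cvg_pair (cf _ Ax) (cg _ Ax). exact.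
Qed.

Lemma fst_cont {X Y : topologicalType} : continuous (fun p : X * Y => p.1).
Proof. move=> p; exact: cvg_fst. Qed.
Lemma snd_cont {X Y : topologicalType} : continuous (fun p : X * Y => p.2).
Proof. move=> p; exact: cvg_snd. Qed.
Lemma pair_cont (X Y Z : topologicalType) (f : X -> Y) (g : X -> Z) :
  continuous f -> continuous g -> continuous (fun x => (f x, g x)).
Proof. move=> cf cg x; exact: cvg_pair (cf x) (cg x). Qed.

Lemma comp_cont {X Y Z : topologicalType} {f : X -> Y} {g : Y -> Z} :
  continuous f -> continuous g -> continuous (g \o f).
Proof. move=> cf cg x; exact: continuous_comp (cf x) (cg (f x)). Qed.

Section Main.
Variables (R : realType) (G : topologicalType)
    (mul : G -> G -> G) (inv : G -> G) (one : G).
Hypothesis hG : topological_group mul inv one.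

Lemma dir1 k : hdist_le R (fun x : G => x) inv k ->
  hdist_le R (fun p : G * G => mul p.1 p.2) (fun p : G * G => mul (inv p.1) p.2) k.
Proof.
case: hG => _ _ _ cm _.
case=> U [oU cU hU].
exists (fun j => (fun p : G * G => p.1) @^-1` U j); split.
- move=> j hj; exact: (proj1 (continuousP _) (@fst_cont G G) _ (oU j hj)).
- apply/seteqP; split => // [[x y]] _.
  have : setT x by [].
  rewrite -cU => -[j hj Ux]; by exists j.
- move=> j hj; case: (hU j hj) => H [cH H0 H1].
  exists (fun p : (G * G) * R => mul (H (p.1.1, p.2)) p.1.2); split.
  + have -> : (fun p : (G * G) * R => mul (H (p.1.1, p.2)) p.1.2) =
      (fun q : G * G => mul q.1 q.2) \o
      (fun p : (G * G) * R => (H (p.1.1, p.2), p.1.2)) by [].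
    apply: wc_comp_out => //.
    apply: wc_pair.
    * have -> : (fun p : (G * G) * R => H (p.1.1, p.2)) =
        H \o (fun p : (G * G) * R => (p.1.1, p.2)) by [].
      apply: wc_comp_in cH.
      -- apply: pair_cont; last exact: snd_cont.
         exact: (comp_cont fst_cont fst_cont).
      -- by move=> [[x y] t] [/= Ux Ht].
    * apply: continuous_subspaceT.
      exact: (comp_cont fst_cont snd_cont).
  + by move=> [x y] /= Ux; rewrite H0.
  + by move=> [x y] /= Ux; rewrite H1.
Qed.

Lemma dir2 k :
  hdist_le R (fun p : G * G => mul p.1 p.2) (fun p : G * G => mul (inv p.1) p.2) k ->
  hdist_le R (fun x : G => x) inv k.
Proof.
case: hG => _ hone _ _ _.
have cpair : continuous (fun x : G => (x, one)).
  by apply: (@pair_cont G G G id (fun=> one)); [move=> x; exact: cvg_id | exact: cst_continuous].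
case=> V [oV cV hV].
exists (fun j => (fun x : G => (x, one)) @^-1` V j); split.
- move=> j hj; exact: (proj1 (continuousP _) cpair _ (oV j hj)).
- apply/seteqP; split => // x _.
  have : setT (x, one) by [].
  rewrite -cV => -[j hj Ux]; by exists j.
- move=> j hj; case: (hV j hj) => K [cK K0 K1].
  exists (K \o (fun p : G * R => ((p.1, one), p.2))); split.
  + apply: wc_comp_in cK.
    * apply: pair_cont; last exact: snd_cont.
      exact: (comp_cont fst_cont cpair).
    * by move=> [x t] [/= Ux Ht].
  + by move=> x Ux /=; rewrite K0 //= (proj2 (hone x)).
  + by move=> x Ux /=; rewrite K1 //= (proj2 (hone (inv x))).
Qed.
End Main.

Lemma hdist_ext (R : realType) (X Y X' Y' : topologicalType) (f g : X -> Y) (f' g' : X' -> Y') :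
  (forall k, hdist_le R f g k <-> hdist_le R f' g' k) -> hdist R f g = hdist R f' g'.
Proof.
move=> E; rewrite /hdist.
case: pselect => h1; case: pselect => h2.
- congr Some.
  case: ex_minnP => m Pm minm; case: ex_minnP => m' Pm' minm'.
  apply/eqP; rewrite eqn_leq; apply/andP; split.
  + apply: minm; apply/asboolP; apply/E; exact/asboolP.
  + apply: minm'; apply/asboolP; apply/E; exact/asboolP.
- exfalso; apply: h2; case: h1 => k hk; exists k; exact/E.
- exfalso; apply: h1; case: h2 => k hk; exists k; exact/E.
- by [].
Qed.

Theorem proposition4p3 (R : realType) (n : nat) (G : topologicalType)
    (mul : G -> G -> G) (inv : G -> G) (one : G) :
  topological_group mul inv one ->
  hausdorff_space G ->
  locally_euclidean R n G ->
  hdist R (fun p : G * G => mul p.1 p.2) (fun p : G * G => mul (inv p.1) p.2)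
  = hdist R (fun x : G => x) inv.
Proof.
move=> hG _ _; apply: hdist_ext => k; split.
- exact: dir2 hG k.
- exact: dir1 hG k.
Qed.
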